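(* Let $n\ge 2$ and let $\mathbb{H}^n=\mathbb{R}^+\times\mathbb{R}^{n-1}=\{(t,x)\}$ be the hyperbolic upper-half space with metric $ds^2=\frac{1}{t^2}(dt^2+dx_1^2+\dots+dx_{n-1}^2)$. Let $h:\mathbb{R}^{n-1}\to\mathbb{C}$ be a non-constant function harmonic with respect to the Euclidean metric on $\mathbb{R}^{n-1}$, let $r\ge 1$ be an integer, and let $p_r:\mathbb{R}^+\to\mathbb{C}$ be given by $p_r(t)=(a_r+b_r t^{n-1})\cdot\log(t)^{r-1}$, where $(a_r,b_r)\in\mathbb{C}^2$ is non-zero. Then the function $f_r:\mathbb{H}^n\to\mathbb{C}$, $f_r(t,x)=p_r(t)\cdot h(x)$, is proper $r$-harmonic on $\mathbb{H}^n$.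
   Context: For a Riemannian manifold $(M,g)$ the Laplace–Beltrami operator (tension field) acts on complex-valued functions by $\tau(f)=\sum_{i,j}\frac{1}{\sqrt{|g|}}\frac{\partial}{\partial x_j}\bigl(g^{ij}\sqrt{|g|}\frac{\partial f}{\partial x_i}\bigr)$; on $\mathbb{H}^n$ this is $\tau(f)=t^2\sum_{k=1}^{n-1}\frac{\partial^2 f}{\partial x_k^2}+t^2\frac{\partial^2 f}{\partial t^2}-(n-2)t\frac{\partial f}{\partial t}$. Iterates: $\tau^0(f)=f$, $\tau^r(f)=\tau(\tau^{r-1}(f))$. A function $f$ is $r$-harmonic if $\tau^r(f)=0$, and proper $r$-harmonic if moreover $\tau^{r-1}(f)$ does not vanish identically. *)

(* Defs.v *)
From HB Require Import structures.
From mathcomp Require Import all_boot all_order all_algebra.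
From mathcomp Require Import all_classical all_reals.
From mathcomp Require Import topology normedtype derive exp.
From mathcomp Require Import complex.

Set Implicit Arguments.
Unset Strict Implicit.
Unset Printing Implicit Defensive.

Import Order.TTheory GRing.Theory Num.Theory.
Import numFieldNormedType.Exports.
Local Open Scope ring_scope.
Local Open Scope complex_scope.

Section Defs.
Variable R : realType.

Definition cderive1 (g : R -> R[i]) (t : R) : R[i] :=
  (derive1 (fun s => complex.Re (g s)) t) +i* (derive1 (fun s => complex.Im (g s)) t).

Definition cderivable (g : R -> R[i]) (t : R) : Prop :=
  derivable (fun s => complex.Re (g s)) t 1 /\ derivable (fun s => complex.Im (g s)) t 1.

Definition ccontinuous (m : nat) (g : 'rV[R]_m -> R[i]) : Prop :=
  continuous (fun x => complex.Re (g x)) /\ continuous (fun x => complex.Im (g x)).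

Definition ebasis (m : nat) (k : 'I_m) : 'rV[R]_m := \row_(j < m) (j == k)%:R.

Definition cpartial (m : nat) (k : 'I_m) (h : 'rV[R]_m -> R[i]) (x : 'rV[R]_m) : R[i] :=
  cderive1 (fun s => h (x + s *: ebasis k)) 0.

Definition C2 (m : nat) (h : 'rV[R]_m -> R[i]) : Prop :=
  ccontinuous h /\
  (forall k x, cderivable (fun s => h (x + s *: ebasis k)) 0) /\
  (forall k, ccontinuous (cpartial k h)) /\
  (forall j k x, cderivable (fun s => cpartial k h (x + s *: ebasis j)) 0) /\
  (forall j k, ccontinuous (cpartial j (cpartial k h))).

Definition euclid_laplacian (m : nat) (h : 'rV[R]_m -> R[i]) (x : 'rV[R]_m) : R[i] :=
  \sum_(k < m) cpartial k (cpartial k h) x.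

Definition harmonic (m : nat) (h : 'rV[R]_m -> R[i]) : Prop :=
  C2 h /\ forall x, euclid_laplacian h x = 0.

(* Functions on H^n = R^+ x R^(n-1) are represented as F : R -> 'rV_(n-1) -> C;
   only values with t > 0 are relevant. *)

Definition dt (m : nat) (F : R -> 'rV[R]_m -> R[i]) (t : R) (x : 'rV[R]_m) : R[i] :=
  cderive1 (fun s => F s x) t.
Definition dx (m : nat) (k : 'I_m) (F : R -> 'rV[R]_m -> R[i]) (t : R) (x : 'rV[R]_m) : R[i] :=
  cpartial k (F t) x.

Definition tension (n : nat) (F : R -> 'rV[R]_n.-1 -> R[i]) : R -> 'rV[R]_n.-1 -> R[i] :=
  fun t x =>
    (t ^+ 2)%:C * (\sum_(k < n.-1) dx k (dx k F) t x)
    + (t ^+ 2)%:C * dt (dt F) t x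
    - ((n - 2)%:R * t)%:C * dt F t x.

Definition tension_iter (n r : nat) (F : R -> 'rV[R]_n.-1 -> R[i]) :=
  iter r (@tension n) F.

Definition r_harmonic (n r : nat) (F : R -> 'rV[R]_n.-1 -> R[i]) : Prop :=
  forall t x, 0 < t -> tension_iter r F t x = 0.
Definition proper_r_harmonic (n r : nat) (F : R -> 'rV[R]_n.-1 -> R[i]) : Prop :=
  r_harmonic r F /\ exists t x, 0 < t /\ tension_iter r.-1 F t x != 0.

End Defs.

(* Main.v *)
Require Import Defs.
From HB Require Import structures.
From mathcomp Require Import all_boot all_order all_algebra.
From mathcomp Require Import all_classical all_reals.
From mathcomp Require Import topology normedtype derive exp realfun.
From mathcomp Require Import complex.
From mathcomp Require Import ring lra.
Import Order.TTheory GRing.Theory Num.Theory.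
Import numFieldNormedType.Exports.
Local Open Scope ring_scope.
Local Open Scope complex_scope.
Section S.
Variable R : realType.
Definition Ef (m : nat) (P Q : {poly R}) (s : R) : R := P.[ln s] + s ^+ m * Q.[ln s].
Definition DQ (m : nat) (Q : {poly R}) := Q^`() + m%:R *: Q.
Lemma Ef_der (m : nat) (P Q : {poly R}) (t : R) : 0 < t -> is_derive t 1 (Ef m P Q) (Ef m P^`() (DQ m Q) t / t).
Proof.
move=> t0.
have HP := is_derive1_comp (is_derive_poly P (ln t)) (is_derive1_ln t0).
have HQ := is_derive1_comp (is_derive_poly Q (ln t)) (is_derive1_ln t0).
have HX := is_deriveX m (is_derive_id t (1:R)).
have H := is_deriveD HP (is_deriveM HX HQ).
have -> : Ef m P Q = ((horner P \o @ln R) + ((id ^+ m) * (horner Q \o @ln R))).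
  by apply/funext => s; rewrite /Ef !fctE.
apply: (is_derive_eq H).
have Hm : m%:R * t^+m.-1 = m%:R * t^+m / t.
  case: m {H HX} => [|k]; first by rewrite !mul0r.
  rewrite exprS /=; field; exact: lt0r_neq0.
rewrite Hm /Ef /DQ !fctE hornerD hornerZ /=.
have sc : forall x y : R, x *: y = x * y by [].
rewrite !sc mulr1.
field. exact: lt0r_neq0.
Qed.

Lemma cder (G : R -> R[i]) (c : R[i]) (t : R) (u v : R -> R) (du dv : R) :
  (\forall s \near t, G s = c * (u s +i* v s)) ->
  is_derive t 1 u du -> is_derive t 1 v dv ->
  cderive1 G t = c * (du +i* dv) /\ cderivable G t.
Proof.
case: c => c1 c2 HG Du Dv.
have DRe : is_derive t 1 (fun s => c1 * u s - c2 * v s) (c1 * du - c2 * dv).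
  have H := is_deriveB (is_deriveZ c1 Du) (is_deriveZ c2 Dv).
  have -> : (fun s => c1 * u s - c2 * v s) = (c1 *: u - c2 *: v) by apply/funext.
  exact: H.
have DIm : is_derive t 1 (fun s => c1 * v s + c2 * u s) (c1 * dv + c2 * du).
  have H := is_deriveD (is_deriveZ c1 Dv) (is_deriveZ c2 Du).
  have -> : (fun s => c1 * v s + c2 * u s) = (c1 *: v + c2 *: u) by apply/funext.
  exact: H.
have E1 : \forall s \near t, c1 * u s - c2 * v s = complex.Re (G s).
  by near do rewrite (near HG) //.
have E2 : \forall s \near t, c1 * v s + c2 * u s = complex.Im (G s).
  by near do rewrite (near HG) //.
have D1 := near_eq_is_derive E1 DRe.
have D2 := near_eq_is_derive E2 DIm.
split; last by split; [exact: (@ex_derive _ _ _ _ _ _ _ D1) | exact: (@ex_derive _ _ _ _ _ _ _ D2)].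
rewrite /cderive1 !derive1E.
rewrite (@derive_val _ _ _ _ _ _ _ D1) (@derive_val _ _ _ _ _ _ _ D2).
reflexivity.
Unshelve. all: by end_near.
Qed.

Lemma cder_const (g : R -> R[i]) (c : R[i]) (t : R) :
  cderivable g t -> cderive1 (fun s => c * g s) t = c * cderive1 g t.
Proof.
case=> d1 d2.
have HG : \forall s \near t, c * g s = c * (complex.Re (g s) +i* complex.Im (g s)).
  by near=> s; case: (g s).
have [-> _] := @cder (fun s => c * g s) c t (fun s => complex.Re (g s))
  (fun s => complex.Im (g s)) _ _ HG (DeriveDef d1 erefl) (DeriveDef d2 erefl).
by rewrite /cderive1 !derive1E.
Unshelve. all: by end_near.
Qed.

Lemma Ef_der2 (m : nat) (P Q : {poly R}) (t : R) : 0 < t ->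
  is_derive t 1 (fun s => Ef m P Q s / s)
    ((Ef m P^`() (DQ m Q) t / t) * t^-1 + Ef m P Q t * (- t ^- 2)).
Proof.
move=> t0.
have H := is_deriveM (Ef_der m P Q t t0) (is_deriveV (lt0r_neq0 t0) (is_derive_id t (1:R))).
have -> : (fun s => Ef m P Q s / s) = (Ef m P Q * (fun y => (id y)^-1)) by apply/funext.
apply: (is_derive_eq H).
have sc : forall x y : R, x *: y = x * y by [].
rewrite !sc /=; field; exact: lt0r_neq0.
Qed.

Definition CE (m : nat) (P1 Q1 P2 Q2 : {poly R}) (s : R) : R[i] :=
  Ef m P1 Q1 s +i* Ef m P2 Q2 s.
Definition LP (m : nat) (P : {poly R}) := P^`()^`() - m%:R *: P^`().
Definition LQ (m : nat) (Q : {poly R}) := DQ m (DQ m Q) - m%:R *: DQ m Q.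

Lemma Ef_lin (m : nat) (P P' Q Q' : {poly R}) (a s : R) :
  Ef m (P - a *: P') (Q - a *: Q') s = Ef m P Q s - a * Ef m P' Q' s.
Proof. rewrite /Ef !hornerE; ring. Qed.

Lemma ReM (x y : R[i]) : complex.Re (x * y) = complex.Re x * complex.Re y - complex.Im x * complex.Im y.
Proof. by case: x; case: y. Qed.
Lemma ImM (x y : R[i]) : complex.Im (x * y) = complex.Re x * complex.Im y + complex.Im x * complex.Re y.
Proof. by case: x; case: y. Qed.
Lemma ReD (x y : R[i]) : complex.Re (x + y) = complex.Re x + complex.Re y.
Proof. by case: x; case: y. Qed.
Lemma ImD (x y : R[i]) : complex.Im (x + y) = complex.Im x + complex.Im y.
Proof. by case: x; case: y. Qed.
Lemma ReN (x : R[i]) : complex.Re (- x) = - complex.Re x.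
Proof. by case: x. Qed.
Lemma ImN (x : R[i]) : complex.Im (- x) = - complex.Im x.
Proof. by case: x. Qed.
Lemma ReC (x : R) : complex.Re (x%:C) = x.
Proof. by []. Qed.
Lemma ImC (x : R) : complex.Im (x%:C) = 0.
Proof. by []. Qed.
Lemma Re0 : complex.Re (0 : R[i]) = 0.
Proof. by []. Qed.
Lemma Im0 : complex.Im (0 : R[i]) = 0.
Proof. by []. Qed.
Lemma ReK (x y : R) : complex.Re (x +i* y) = x.
Proof. by []. Qed.
Lemma ImK (x y : R) : complex.Im (x +i* y) = y.
Proof. by []. Qed.
Lemma ceq (x y : R[i]) : complex.Re x = complex.Re y -> complex.Im x = complex.Im y -> x = y.
Proof. by case: x; case: y => /= ? ? ? ? -> ->. Qed.
Definition cE := (ReM, ImM, ReD, ImD, ReN, ImN, ReC, ImC, Re0, Im0, ReK, ImK).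

Lemma natm2 (n : nat) : (2 <= n)%N -> ((n - 2)%:R : R) = (n.-1)%:R - 1.
Proof.
case: n => [|[|k]] // _.
have -> : (k.+2 - 2 = k)%N by rewrite -addn2 addnK.
by rewrite /= -natr1 addrK.
Qed.

Lemma fooRe (t A1 A2 B1 B2 mm c1 c2 : R) : t != 0 ->
  t ^+ 2 * 0 - 0 * 0 +
  (t ^+ 2 *
   (c1 * (A1 / t / t + B1 * - t ^- 2) -
    c2 * (A2 / t / t + B2 * - t ^- 2)) -
   0 *
   (c1 * (A2 / t / t + B2 * - t ^- 2) +
    c2 * (A1 / t / t + B1 * - t ^- 2))) -
  ((mm - 1) * t * (c1 * (B1 / t) - c2 * (B2 / t)) -
   0 * (c1 * (B2 / t) + c2 * (B1 / t))) =
  (A1 - mm * B1) * c1 - (A2 - mm * B2) * c2.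
Proof. by move=> t0; field. Qed.
Lemma fooIm (t A1 A2 B1 B2 mm c1 c2 : R) : t != 0 ->
 t ^+ 2 * 0 + 0 * 0 +
 (t ^+ 2 *
  (c1 * (A2 / t / t + B2 * - t ^- 2) +
   c2 * (A1 / t / t + B1 * - t ^- 2)) +
  0 *
  (c1 * (A1 / t / t + B1 * - t ^- 2) -
   c2 * (A2 / t / t + B2 * - t ^- 2))) -
 ((mm - 1) * t * (c1 * (B2 / t) + c2 * (B1 / t)) +
  0 * (c1 * (B1 / t) - c2 * (B2 / t))) =
 (A1 - mm * B1) * c2 + (A2 - mm * B2) * c1.
Proof. by move=> t0; field. Qed.

Lemma step (n : nat) (hn : (2 <= n)%N) (h : 'rV[R]_n.-1 -> R[i]) (hharm : harmonic h)
  (G : R -> 'rV[R]_n.-1 -> R[i]) (P1 Q1 P2 Q2 : {poly R}) :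
  (forall t x, 0 < t -> G t x = CE n.-1 P1 Q1 P2 Q2 t * h x) ->
  forall t x, 0 < t ->
    tension G t x = CE n.-1 (LP n.-1 P1) (LQ n.-1 Q1) (LP n.-1 P2) (LQ n.-1 Q2) t * h x.
Proof.
move=> HG t x t0.
case: hharm => [[_ [hd1 [_ [hd2 _]]]] hlap].
have Gt : G t = fun y => CE n.-1 P1 Q1 P2 Q2 t * h y by apply/funext => y; rewrite HG.
have Hx1 : forall k, dx k G t = fun y => CE n.-1 P1 Q1 P2 Q2 t * cpartial k h y.
  by move=> k; apply/funext => y; rewrite /dx /cpartial Gt cder_const //; exact: hd1.
have Hsum : \sum_(k < n.-1) dx k (dx k G) t x = 0.
  rewrite (eq_bigr (fun k => CE n.-1 P1 Q1 P2 Q2 t * cpartial k (cpartial k h) x)); last first.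
    by move=> k _; rewrite -[dx k (dx k G) t x]/(cpartial k (dx k G t) x) Hx1 /cpartial cder_const //; exact: hd2.
  by rewrite -mulr_sumr; have := hlap x; rewrite /euclid_laplacian => ->; rewrite mulr0.
have Ht1 : forall s, 0 < s -> dt G s x =
    h x * ((Ef n.-1 P1^`() (DQ n.-1 Q1) s / s) +i* (Ef n.-1 P2^`() (DQ n.-1 Q2) s / s)).
  move=> s s0; rewrite /dt.
  have HGn : \forall u \near s, G u x = h x * (Ef n.-1 P1 Q1 u +i* Ef n.-1 P2 Q2 u).
    near=> u; rewrite HG; first by rewrite mulrC.
    near: u; exact: lt_nbhsr.
  by have [-> _] := @cder _ _ _ _ _ _ _ HGn (Ef_der n.-1 P1 Q1 s s0) (Ef_der n.-1 P2 Q2 s s0).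
have Ht2 : dt (dt G) t x = h x *
   ((((Ef n.-1 P1^`()^`() (DQ n.-1 (DQ n.-1 Q1)) t / t) * t^-1 + Ef n.-1 P1^`() (DQ n.-1 Q1) t * (- t ^- 2))) +i*
    (((Ef n.-1 P2^`()^`() (DQ n.-1 (DQ n.-1 Q2)) t / t) * t^-1 + Ef n.-1 P2^`() (DQ n.-1 Q2) t * (- t ^- 2)))).
  rewrite {1}/dt.
  have HGn : \forall u \near t, dt G u x = h x * ((Ef n.-1 P1^`() (DQ n.-1 Q1) u / u)
                                               +i* (Ef n.-1 P2^`() (DQ n.-1 Q2) u / u)).
    near=> u; rewrite Ht1 //; near: u; exact: lt_nbhsr.
  by have [-> _] := @cder _ _ _ _ _ _ _ HGn (Ef_der2 n.-1 P1^`() (DQ n.-1 Q1) t t0) (Ef_der2 n.-1 P2^`() (DQ n.-1 Q2) t t0).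
rewrite /tension Hsum Ht2 Ht1 // /CE /LP /LQ !Ef_lin natm2 //.
move: (h x) => c.
move: (Ef n.-1 (P1^`())^`() _ t) (Ef n.-1 (P2^`())^`() _ t) (Ef n.-1 P1^`() _ t) (Ef n.-1 P2^`() _ t) => A1 A2 B1 B2.
move: (n.-1%:R : R) => mm.
case: c => c1 c2; apply: ceq; rewrite !cE.
- by apply: fooRe; exact: lt0r_neq0.
- by apply: fooIm; exact: lt0r_neq0.
Unshelve. all: by end_near.
Qed.

Lemma coefLP (m : nat) (P : {poly R}) i :
  (LP m P)`_i = P`_(i.+2) *+ i.+2 *+ i.+1 - m%:R * (P`_(i.+1) *+ i.+1).
Proof. by rewrite /LP coefB coefZ !coef_deriv. Qed.

Lemma coefLQ (m : nat) (Q : {poly R}) i :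
  (LQ m Q)`_i = (Q`_(i.+2) *+ i.+2 + m%:R * Q`_(i.+1)) *+ i.+1.
Proof.
rewrite /LQ coefB coefZ.
rewrite {1}/DQ coefD coefZ coef_deriv.
by rewrite addrK /DQ coefD coefZ coef_deriv.
Qed.

Lemma LP_size (m : nat) (P : {poly R}) d :
  (size P <= d.+1)%N -> (size (LP m P) <= d)%N.
Proof.
move/leq_sizeP => HP; apply/leq_sizeP => j hj.
by rewrite coefLP !HP ?mul0rn ?mulr0 ?subr0 // ltnW.
Qed.

Lemma LQ_size (m : nat) (Q : {poly R}) d :
  (size Q <= d.+1)%N -> (size (LQ m Q) <= d)%N.
Proof.
move/leq_sizeP => HQ; apply/leq_sizeP => j hj.
by rewrite coefLQ !HQ ?mul0rn ?mulr0 ?addr0 ?mul0rn // ltnW.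
Qed.

Lemma LP_lead (m : nat) (P : {poly R}) d :
  (size P <= d.+2)%N -> (LP m P)`_d = - (m%:R * d.+1%:R) * P`_d.+1.
Proof.
move/leq_sizeP => HP; rewrite coefLP HP // mul0rn mul0rn sub0r -mulr_natl; ring.
Qed.

Lemma LQ_lead (m : nat) (Q : {poly R}) d :
  (size Q <= d.+2)%N -> (LQ m Q)`_d = (m%:R * d.+1%:R) * Q`_d.+1.
Proof.
move/leq_sizeP => HQ; rewrite coefLQ HQ // mul0rn add0r -mulr_natl; ring.
Qed.

End S.

Arguments LP {R}. Arguments LQ {R}. Arguments DQ {R}. Arguments Ef {R}. Arguments CE {R}.
Arguments step {R}.

Definition Fr (R : realType) (n r : nat) (a b : R[i]) (h : 'rV[R]_n.-1 -> R[i]) :=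
  (fun (t : R) (x : 'rV[R]_n.-1) =>
       ((a + b * (t ^+ n.-1)%:C) * ((ln t) ^+ r.-1)%:C) * h x).

Arguments Fr {R}.

Lemma beq1 (R : realType) (a1 a2 b1 b2 T L : R) :
  (a1 + (b1 * T - b2 * 0)) * L - (a2 + (b1 * 0 + b2 * T)) * 0 = a1 * L + T * (b1 * L).
Proof. ring. Qed.
Lemma beq2 (R : realType) (a1 a2 b1 b2 T L : R) :
  (a1 + (b1 * T - b2 * 0)) * 0 + (a2 + (b1 * 0 + b2 * T)) * L = a2 * L + T * (b2 * L).
Proof. ring. Qed.

Lemma base_eq (R : realType) (m k : nat) (a b : R[i]) (t : R) :
  (a + b * (t ^+ m)%:C) * ((ln t) ^+ k)%:C =
  CE m (complex.Re a *: 'X^k) (complex.Re b *: 'X^k) (complex.Im a *: 'X^k) (complex.Im b *: 'X^k) t.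
Proof.
rewrite /CE /Ef !hornerZ !hornerXn.
case: a => a1 a2; case: b => b1 b2; apply: ceq; rewrite !cE.
- exact: beq1.
- exact: beq2.
Qed.

Lemma inv (R : realType) (n : nat) (hn : (2 <= n)%N) (h : 'rV[R]_n.-1 -> R[i])
  (hharm : harmonic h) (r : nat) (a b : R[i]) (j : nat) :
  (j <= r.-1)%N -> exists (P1 Q1 P2 Q2 : {poly R}) (g : R),
   g != 0 /\
   (size P1 <= (r.-1 - j).+1)%N /\ (size Q1 <= (r.-1 - j).+1)%N /\
   (size P2 <= (r.-1 - j).+1)%N /\ (size Q2 <= (r.-1 - j).+1)%N /\
   P1`_(r.-1 - j) = g * (-1) ^+ j * complex.Re a /\
   P2`_(r.-1 - j) = g * (-1) ^+ j * complex.Im a /\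
   Q1`_(r.-1 - j) = g * complex.Re b /\
   Q2`_(r.-1 - j) = g * complex.Im b /\
   (forall t x, 0 < t -> tension_iter j (Fr n r a b h) t x = CE n.-1 P1 Q1 P2 Q2 t * h x).
Proof.
have m0 : (0 < n.-1)%N by case: n hn {h hharm} => [|[|]].
elim: j => [|j IH] hj.
  exists (complex.Re a *: 'X^(r.-1)), (complex.Re b *: 'X^(r.-1)),
         (complex.Im a *: 'X^(r.-1)), (complex.Im b *: 'X^(r.-1)), 1.
  rewrite subn0 !coefZ coefXn eqxx !mulr1 ?expr0 !mul1r.
  do ! split => //; try by rewrite oner_eq0.
  - by apply: (leq_trans (size_scale_leq _ _)); rewrite size_polyXn.
  - by apply: (leq_trans (size_scale_leq _ _)); rewrite size_polyXn.
  - by apply: (leq_trans (size_scale_leq _ _)); rewrite size_polyXn.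
  - by apply: (leq_trans (size_scale_leq _ _)); rewrite size_polyXn.
  - by move=> t x t0; rewrite /= /Fr base_eq.
have [P1 [Q1 [P2 [Q2 [g [g0 [s1 [s2 [s3 [s4 [c1 [c2 [c3 [c4 HF]]]]]]]]]]]]]] := IH (ltnW hj).
have ed : (r.-1 - j = (r.-1 - j.+1).+1)%N by rewrite subnS prednK // subn_gt0.
set d := (r.-1 - j.+1)%N in ed *.
rewrite ed in s1 s2 s3 s4 c1 c2 c3 c4.
exists (LP n.-1 P1), (LQ n.-1 Q1), (LP n.-1 P2), (LQ n.-1 Q2), (g * (n.-1%:R * d.+1%:R)).
split.
  by rewrite mulf_neq0 // mulf_neq0 // pnatr_eq0 -lt0n.
split; first exact: LP_size.
split; first exact: LQ_size.
split; first exact: LP_size.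
split; first exact: LQ_size.
split; first by rewrite LP_lead // c1 exprS; ring.
split; first by rewrite LP_lead // c2 exprS; ring.
split; first by rewrite LQ_lead // c3; ring.
split; first by rewrite LQ_lead // c4; ring.
move=> t x t0.
rewrite /tension_iter iterS.
exact: (step n hn h hharm _ P1 Q1 P2 Q2 HF).
Qed.

Lemma zero_lem (R : realType) (m : nat) (p q g s u v : R) : (0 < m)%N -> g != 0 -> s != 0 ->
  p = g * s * u -> q = g * v -> p + 1 ^+ m * q = 0 -> p + 2 ^+ m * q = 0 -> u = 0 /\ v = 0.
Proof.
move=> m0 g0 s0 -> -> e1 e2.
have h2 : (2 : R) ^+ m - 1 != 0.
  by rewrite subr_eq0 gt_eqF // exprn_egt1 ?ltr1n // -lt0n.
have hv : g * v * (2 ^+ m - 1) = 0.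
  rewrite expr1n mul1r in e1.
  have H : (g * s * u + 2 ^+ m * (g * v)) - (g * s * u + g * v) = 0 by rewrite e2 e1 subr0.
  by rewrite -H; ring.
have v0 : v = 0.
  by move: hv => /eqP; rewrite !mulf_eq0 (negbTE g0) (negbTE h2) /= orbF => /eqP.
split => //.
move: e1; rewrite v0 !mulr0 addr0 => /eqP; rewrite !mulf_eq0 (negbTE g0) (negbTE s0) /=.
by move/eqP.
Qed.

Arguments inv {R}. Arguments zero_lem {R}.

Theorem theorem3p3 (R : realType) (n : nat) (hn : (2 <= n)%N)
  (h : 'rV[R]_n.-1 -> R[i])
  (hharm : harmonic h)
  (hnc : exists x y, h x != h y)
  (r : nat) (hr : (1 <= r)%N)
  (a b : R[i]) (hab : (a, b) != (0, 0)) :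
  proper_r_harmonic r
    (fun (t : R) (x : 'rV[R]_n.-1) =>
       ((a + b * (t ^+ n.-1)%:C) * ((ln t) ^+ r.-1)%:C) * h x).
Proof.
have m0 : (0 < n.-1)%N by case: n hn {h hharm hnc} => [|[|]].
change (proper_r_harmonic r (Fr n r a b h)).
have [P1 [Q1 [P2 [Q2 [g [g0 [s1 [s2 [s3 [s4 [c1 [c2 [c3 [c4 HF]]]]]]]]]]]]]] :=
  inv n hn h hharm r a b r.-1 (leqnn r.-1).
rewrite subnn in s1 s2 s3 s4 c1 c2 c3 c4.
case: r hr hab HF c1 c2 => [|k] // _ hab HF c1 c2.
rewrite /= in HF c1 c2.
split.
  move=> t x t0.
  rewrite /tension_iter iterS.
  rewrite (step n hn h hharm _ P1 Q1 P2 Q2 HF t x t0).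
  have z1 : LP n.-1 P1 = 0 by apply/eqP; rewrite -size_poly_leq0; exact: LP_size.
  have z2 : LQ n.-1 Q1 = 0 by apply/eqP; rewrite -size_poly_leq0; exact: LQ_size.
  have z3 : LP n.-1 P2 = 0 by apply/eqP; rewrite -size_poly_leq0; exact: LP_size.
  have z4 : LQ n.-1 Q2 = 0 by apply/eqP; rewrite -size_poly_leq0; exact: LQ_size.
  rewrite z1 z2 z3 z4.
  have -> : CE n.-1 0 0 0 0 t = 0 by rewrite /CE /Ef !horner0 mulr0 addr0.
  by rewrite mul0r.
have [x0 hx0] : exists x0, h x0 != 0.
  case: hnc => x [y hxy]; case: (eqVneq (h x) 0) => hx; last by exists x.
  by exists y; rewrite hx eq_sym in hxy.
have val : forall t, 0 < t -> tension_iter k (Fr n k.+1 a b h) t x0 =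
   ((P1`_0 + t ^+ n.-1 * Q1`_0) +i* (P2`_0 + t ^+ n.-1 * Q2`_0)) * h x0.
  move=> t t0; rewrite HF // /CE /Ef.
  by rewrite {1}(size1_polyC s1) {1}(size1_polyC s2) {1}(size1_polyC s3) {1}(size1_polyC s4) !hornerC.
case: (eqVneq ((P1`_0 + 1 ^+ n.-1 * Q1`_0) +i* (P2`_0 + 1 ^+ n.-1 * Q2`_0)) 0) => e1.
  case: (eqVneq ((P1`_0 + 2 ^+ n.-1 * Q1`_0) +i* (P2`_0 + 2 ^+ n.-1 * Q2`_0)) 0) => e2.
    exfalso.
    have sg : ((-1) ^+ k : R) != 0 by rewrite signr_eq0.
    have [ra rb] := zero_lem _ _ _ _ _ _ _ m0 g0 sg c1 c3 (congr1 (@complex.Re R) e1) (congr1 (@complex.Re R) e2).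
    have [ia ib] := zero_lem _ _ _ _ _ _ _ m0 g0 sg c2 c4 (congr1 (@complex.Im R) e1) (congr1 (@complex.Im R) e2).
    have a0 : a = 0 by apply: ceq.
    have b0 : b = 0 by apply: ceq.
    by rewrite a0 b0 eqxx in hab.
  exists 2, x0; split => //; rewrite val // mulf_neq0 //.
exists 1, x0; split => //; rewrite val // mulf_neq0 //.
Qed.
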